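(* Let $n\ge 4$ and let $x$ be a vertex of the path $P_n$ which is not a bad vertex (i.e. it is not the case that $n=5$ and $x$ is the middle vertex of $P_5$). Then there exists a $(P_n,x)$-good path 2-placement.
   Context: $P_n$ is the path on $n$ vertices; $dist$ is distance in $P_n$, $d(y)$ the degree of $y$ in $P_n$, $N(x)$ the set of neighbors of $x$. A permutation $\sigma$ of $V(P_n)$ is a 2-placement of $P_n$ if for every edge $ab$ of $P_n$, $\sigma(a)\sigma(b)$ is not an edge of $P_n$. $P_n^k$ is the $k$-th power of $P_n$; $\sigma(P_n)\subseteq P_n^k$ means $dist(\sigma(a),\sigma(b))\le k$ for every edge $ab$ of $P_n$. A fixed-point-free permutation $\sigma$ of $V(P_n)$ is a $(P_n,x)$-good path 2-placement if: (1) $\sigma$ is a 2-placement of $P_n$; (2) $\sigma(P_n)\subseteq P_n^5$; (3) $dist(x,\sigma(x))=1$; (4) $dist(y,\sigma(y))\le 2$ for every $y\in N(x)$ and for every $y$ with $d(y)=1$. *)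

(* Defs.v *)
(* Path P_n on vertex set 'I_n, vertices 0..n-1, edges {i,i+1}. *)
From mathcomp Require Import all_boot all_order all_fingroup.
Set Implicit Arguments. Unset Strict Implicit. Unset Printing Implicit Defensive.

Definition pdist n (a b : 'I_n) : nat := ((a : nat) - b) + ((b : nat) - a).
Definition padj n (a b : 'I_n) : bool := pdist a b == 1.
Definition pdeg n (y : 'I_n) : nat := #|[set z : 'I_n | padj y z]|.

Definition two_placement n (s : {perm 'I_n}) : Prop :=
  forall a b : 'I_n, padj a b -> ~~ padj (s a) (s b).

(* sigma(P_n) is a subgraph of P_n^k *)
Definition in_power n (k : nat) (s : {perm 'I_n}) : Prop :=
  forall a b : 'I_n, padj a b -> pdist (s a) (s b) <= k.

Definition fixed_point_free n (s : {perm 'I_n}) : Prop :=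
  forall a : 'I_n, s a != a.

Definition good_path_2placement n (x : 'I_n) (s : {perm 'I_n}) : Prop :=
  [/\ fixed_point_free s,
      two_placement s,
      in_power 5 s,
      pdist x (s x) = 1 &
      forall y : 'I_n, (padj x y || (pdeg y == 1)) -> pdist y (s y) <= 2].

Definition bad_vertex n (x : 'I_n) : Prop := n = 5 /\ (x : nat) = 2.

(* Main.v *)
Require Import Defs.
From mathcomp Require Import all_boot all_order all_fingroup.
From mathcomp Require Import zify.
Set Implicit Arguments. Unset Strict Implicit.

Definition Gbase n (f : nat -> nat) : Prop :=
 (forall i, i<n -> f i < n) /\ (forall i j, i<n -> j<n -> f i = f j -> i = j) /\
  (forall i, i<n -> f i <> i) /\
  (forall i, i.+1<n -> f i <> f i.+1 + 1 /\ f i.+1 <> f i + 1 /\ f i <= f i.+1 + 5 /\ f i.+1 <= f i + 5) /\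
  f 0 <= 2 /\ n.-1 <= f n.-1 + 2.

Definition Dx n x (f : nat -> nat) : Prop :=
 [/\ x < n, (f x = x+1 \/ x = f x + 1) &
  (forall y, y<n -> (y.+1 = x \/ y = x.+1) -> f y <= y+2 /\ y <= f y + 2)].

Definition catf n (f g : nat -> nat) i := if i < n then f i else n + g (i - n).

Lemma cat_base n m f g : 0 < n -> 0 < m -> Gbase n f -> Gbase m g -> Gbase (n+m) (catf n f g).
Proof.
move=> n0 m0 [f1 [f2 [f3 [f4 [f5 f6]]]]] [g1 [g2 [g3 [g4 [g5 g6]]]]]; rewrite /catf; split; [|split;[|split;[|split;[|split]]]].
- move=> i Hi; case: (ltnP i n) => H; first by have := f1 i H; lia.
  have := g1 (i-n); lia.
- move=> i j Hi Hj; case: (ltnP i n) => H1; case: (ltnP j n) => H2.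
  + exact: f2.
  + have := f1 i H1; lia.
  + have := f1 j H2; lia.
  + move=> E; have : i - n = j - n by apply: g2; lia.
    lia.
- move=> i Hi; case: (ltnP i n) => H; first exact: f3.
  have := g3 (i-n); lia.
- move=> i Hi; case: (ltnP i.+1 n) => H1.
  + rewrite (ltnW H1); exact: f4.
  case: (ltnP i n) => H2.
  + have -> : i.+1 - n = 0 by lia.
    have Ei : i = n.-1 by lia.
    have := f1 i H2; have := f3 i H2; rewrite Ei; lia.
  + have -> : i.+1 - n = (i - n).+1 by lia.
    have := g4 (i - n); lia.
- by case: ifP => //; lia.
- have -> : (n + m).-1 < n = false by lia.
  have -> : (n + m).-1 - n = m.-1 by lia.
  lia.
Qed.

Lemma cat_Dl n m f g x : 0 < n -> 0 < m -> Gbase m g -> Dx n x f -> Dx (n+m) x (catf n f g).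
Proof.
move=> n0 m0 [g1 [g2 [g3 [g4 [g5 g6]]]]] [d1 d2 d3]; rewrite /catf; split.
- lia.
- by rewrite d1.
- move=> y Hy Hyx; case: (ltnP y n) => H; first exact: d3.
  have -> : y - n = 0 by lia.
  have := g3 0 m0; lia.
Qed.

Lemma cat_Dr n m f g x : 0 < n -> 0 < m -> Gbase n f -> Dx m x g -> Dx (n+m) (n + x) (catf n f g).
Proof.
move=> n0 m0 [f1 [f2 [f3 [f4 [f5 f6]]]]] [d1 d2 d3]; rewrite /catf; split.
- lia.
- have -> : n + x < n = false by lia.
  rewrite addKn; lia.
- move=> y Hy Hyx; case: (ltnP y n) => H.
  + have Ey : y = n.-1 by lia.
    have := f1 y H; have := f3 y H; rewrite Ey; lia.
  + have := d3 (y - n); lia.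
Qed.

Definition Gbb n x (l : seq nat) : bool :=
  let f := fun i => nth 0 l i in
  [&& all (fun i => f i < n) (iota 0 n),
   all (fun i => all (fun j => (f i == f j) ==> (i == j)) (iota 0 n)) (iota 0 n),
   all (fun i => f i != i) (iota 0 n),
   all (fun i => [&& f i != f i.+1 + 1, f i.+1 != f i + 1, f i <= f i.+1+5 & f i.+1 <= f i + 5]) (iota 0 n.-1),
   (f 0 <= 2), (n.-1 <= f n.-1 + 2), (x < n), ((f x == x+1) || (x == f x + 1)) &
   all (fun y => ((y.+1 == x) || (y == x.+1)) ==> (f y <= y+2) && (y <= f y + 2)) (iota 0 n)].

Lemma GbbP n x l : Gbb n x l -> Gbase n (fun i => nth 0 l i) /\ Dx n x (fun i => nth 0 l i).
Proof.
case/and5P=> /allP h1 /allP h2 /allP h3 /allP h4 /and5P[h5 h6 h7 h8 /allP h9].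
split; [split; [|split;[|split;[|split;[|split]]]]|split] => //.
- by move=> i Hi; apply: h1; rewrite mem_iota.
- move=> i j Hi Hj E; have := h2 i; rewrite mem_iota add0n Hi => /(_ isT) /allP /(_ j).
  by rewrite mem_iota Hj E eqxx => /(_ isT) /eqP.
- by move=> i Hi; apply/eqP; apply: h3; rewrite mem_iota.
- move=> i Hi; have := h4 i; rewrite mem_iota add0n.
  have -> : (0 <= i < n.-1) = true by apply/idP; lia.
  move=> H; have := H isT; case/and4P => /eqP ? /eqP ? ? ?; by [].
- by case/orP: h8 => /eqP H; [left|right].
- move=> y Hy Hyx; have := h9 y; rewrite mem_iota Hy /= => /(_ isT).
  have -> : (y.+1 == x) || (y == x.+1) by case: Hyx => ->; rewrite eqxx ?orbT.
  by case/andP.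
Qed.

Definition base n x : seq nat :=
  match n, x with
  | 4, 0 => [:: 1; 3; 0; 2] | 4, 3 => [:: 1; 3; 0; 2] | 4, _ => [:: 2; 0; 3; 1]
  | 5, 0 => [:: 1; 3; 0; 4; 2] | 5, 3 => [:: 1; 3; 0; 4; 2] | 5, _ => [:: 2; 0; 4; 1; 3]
  | 6, 0 => [:: 1; 3; 0; 5; 2; 4] | 6, 5 => [:: 1; 3; 0; 5; 2; 4]
  | 6, 1 => [:: 2; 0; 3; 5; 1; 4] | 6, 2 => [:: 2; 0; 3; 5; 1; 4]
  | 6, _ => [:: 1; 4; 0; 2; 5; 3]
  | 7, 0 => [:: 1; 3; 0; 4; 6; 2; 5] | 7, 3 => [:: 1; 3; 0; 4; 6; 2; 5]
  | 7, 1 => [:: 2; 0; 3; 5; 1; 6; 4] | 7, 2 => [:: 2; 0; 3; 5; 1; 6; 4]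
  | 7, 4 => [:: 2; 0; 5; 1; 3; 6; 4] | 7, 5 => [:: 1; 3; 0; 5; 2; 6; 4]
  | _, _ => [:: 1; 4; 0; 2; 6; 3; 5]
  end.

Lemma base_ok : all (fun n => all (fun x => ((n == 5) && (x == 2)) || Gbb n x (base n x)) (iota 0 n)) (iota 4 4).
Proof. by vm_compute. Qed.

Lemma exG n x : 4 <= n -> x < n -> ~ (n = 5 /\ x = 2) ->
  exists f, Gbase n f /\ Dx n x f.
Proof.
elim/ltn_ind: n x => n IH x n4 xn nb.
case: (ltnP n 8) => n8.
  move/allP: base_ok => /(_ n); rewrite mem_iota.
  have -> : (4 <= n < 4 + 4) by lia.
  move=> /(_ isT) /allP /(_ x); rewrite mem_iota xn /= => /(_ isT) /orP [/andP [/eqP ? /eqP ?]|/GbbP H].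
    by exfalso; apply: nb; split.
  by exists (fun i => nth 0 (base n x) i).
have E : n = 4 + (n - 4) by lia.
case: (ltnP x 4) => x4.
  have [g [Gg _]] := IH (n-4) ltac:(lia) 0 ltac:(lia) ltac:(lia) ltac:(lia).
  have /GbbP [Gf Df] : Gbb 4 x (base 4 x) by move: x4 {xn nb IH E}; case: x => [|[|[|[|]]]].
  exists (catf 4 (fun i => nth 0 (base 4 x) i) g); rewrite E; split.
    by apply: cat_base => //; lia.
  by apply: cat_Dl => //; lia.
case: (boolP ((n == 9) && (x == 6))) => [/andP [/eqP n9 /eqP x6]|nb2].
  have [g [Gg _]] := IH 5 ltac:(lia) 0 ltac:(lia) ltac:(lia) ltac:(lia).
  have /GbbP [Gf Df] : Gbb 4 1 (base 4 1) by [].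
  exists (catf 5 g (fun i => nth 0 (base 4 1) i)); rewrite n9 x6; split.
    exact: (cat_base (n:=5) (m:=4)).
  exact: (cat_Dr (n:=5) (m:=4) (x:=1)).
have [g [Gg Dg]] := IH (n-4) ltac:(lia) (x-4) ltac:(lia) ltac:(lia) ltac:(lia).
have /GbbP [Gf _] : Gbb 4 0 (base 4 0) by [].
exists (catf 4 (fun i => nth 0 (base 4 0) i) g); rewrite E; split.
  by apply: cat_base => //; lia.
have -> : x = 4 + (x - 4) by lia.
by apply: cat_Dr => //; lia.
Qed.

Theorem theorem3p2 (n : nat) (x : 'I_n) :
  4 <= n -> ~ bad_vertex x ->
  exists s : {perm 'I_n}, good_path_2placement x s.
Proof.
move=> n4 nb.
have [f [[f1 [f2 [f3 [f4 [f5 f6]]]]] [_ d2 d3]]] := exG n4 (ltn_ord x) nb.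
pose fo := fun i : 'I_n => Ordinal (f1 _ (ltn_ord i)).
have fi : injective fo.
  move=> i j /(congr1 val) /= E; apply: val_inj; exact: (f2 _ _ (ltn_ord i) (ltn_ord j) E).
have dl : forall a : 'I_n, forall b : 'I_n, padj a b -> (b : nat) = a.+1 \/ (a : nat) = b.+1.
  move=> a b; rewrite /padj /pdist => /eqP; lia.
exists (perm fi); split.
- by move=> a; rewrite permE; apply/eqP => /(congr1 val) /=; apply: f3.
- move=> a b /dl H; rewrite !permE /padj /pdist /=.
  case: H => E.
    have := f4 a; rewrite -E => /(_ (ltn_ord b)); lia.
  have := f4 b; rewrite -E => /(_ (ltn_ord a)); lia.
- move=> a b /dl H; rewrite !permE /pdist /=.
  case: H => E.
    have := f4 a; rewrite -E => /(_ (ltn_ord b)); lia.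
  have := f4 b; rewrite -E => /(_ (ltn_ord a)); lia.
- rewrite permE /pdist /=; lia.
- move=> y /orP [/dl Hxy | Hd]; rewrite permE /pdist /=.
    have := d3 y (ltn_ord y); lia.
  have [y0|yp] := eqVneq (y : nat) 0.
    rewrite y0; lia.
  have [y1|yq] := eqVneq (y : nat) n.-1.
    have := f1 y (ltn_ord y); rewrite y1; lia.
  exfalso; move: Hd; apply/negP; rewrite neq_ltn; apply/orP; right.
  have ha : (y : nat).-1 < n by have := ltn_ord y; lia.
  have hb : (y : nat).+1 < n by have := ltn_ord y; lia.
  apply/card_gt1P; exists (Ordinal ha), (Ordinal hb); rewrite !inE /padj /pdist /=.
  split; [lia|lia|apply/eqP => /(congr1 val) /=; lia].
Qed.
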